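(* Let $q$ be an odd prime power, $d$ a positive integer, and $\varphi_d$ the coloring defined below. If $S \subseteq (\mathbb{F}_q^* )^d$ is a set of $p\ge 1$ vectors with a leftover structure under $\varphi_d$, then $\mathrm{FS}(S) \ge \lceil \log_2 p\rceil + 1$.
   Context: $\mathbb{F}_q^*$ is the set of nonzero elements of $\mathbb{F}_q$, endowed with an arbitrary fixed linear order; $(\mathbb{F}_q^* )^d$ is ordered lexicographically with respect to it. Let $C_d = \mathrm{DOT} \sqcup \mathrm{ZERO}\sqcup\mathrm{UP}\sqcup\mathrm{DOWN}$, where $\mathrm{DOT} = \mathbb{F}_q^*$ and ZERO, UP, DOWN are three disjoint copies of $\{1,\dots,d\}\times \mathbb{F}_q$. For distinct $x<y$ in $(\mathbb{F}_q^* )^d$, let $i$ be the first coordinate where $x$ and $y$ differ, and $x\cdot y$ the standard dot product; $\varphi_d(x,y)=\varphi_d(y,x)$ is $(i,x_i+y_i)$ in ZERO if $x\cdot y=0$; $(i,x_i+y_i)$ in UP if $x\cdot y\ne 0$ and $x\cdot y=x\cdot x$; $(i,x_i+y_i)$ in DOWN if $x\cdot y\notin\{0,x\cdot x\}$ and $x\cdot y=y\cdot y$; and $x\cdot y\in\mathrm{DOT}$ otherwise. For a vertex set $A$, $\varphi_d(A)$ is the set of colors on pairs inside $A$. $S$ has a leftover structure under $\varphi_d$ if $|S|=1$, or $S$ has a partition $S=A\cup B$ into nonempty sets such that $A$ and $B$ each have a leftover structure, $\varphi_d(A)\cap\varphi_d(B)=\emptyset$, and there is a color $\gamma$ with $\varphi_d(a,b)=\gamma$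 for all $a\in A$, $b\in B$ and $\gamma\notin\varphi_d(A)\cup\varphi_d(B)$. Distinct vectors $s_1,\dots,s_t$ form a $t$-falling star if there are colors $\alpha_2,\dots,\alpha_t$ with $\varphi_d(s_i,s_j)=\alpha_i$ for all $1\le j<i\le t$; $\mathrm{FS}(S)$ is the maximum $t$ such that $S$ contains a $t$-falling star. *)

(* Defs.v *)
From HB Require Import structures.
From mathcomp Require Import all_boot all_order all_algebra all_field.
Set Implicit Arguments. Unset Strict Implicit. Unset Printing Implicit Defensive.
Import GRing.Theory.
Local Open Scope ring_scope.

(* The arbitrary fixed linear order on
   F_q^* is given by an injective rank map r : F -> nat (x < y iff r x < r y). *)

Section Coloring.
Variables (F : finFieldType) (d : nat).

Definition vec := {ffun 'I_d -> F}.

Definition nonzero_vec (x : vec) : bool := [forall i, x i != 0].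

(* The color set C_d = DOT ⊔ ZERO ⊔ UP ⊔ DOWN.  Indices are 0-based ('I_d). *)
Inductive color : Type :=
| Dot of F
| Zero of 'I_d & F
| Up of 'I_d & F
| Down of 'I_d & F.

Definition dotp (x y : vec) : F := \sum_(j < d) x j * y j.

Definition firstdiff (x y : vec) : option 'I_d :=
  [pick i | (x i != y i) && [forall j : 'I_d, (j < i)%N ==> (x j == y j)]].

(* color of the pair {x,y} when x < y and i is their first differing index *)
Definition col_ord (x y : vec) (i : 'I_d) : color :=
  let s := x i + y i in
  let xy := dotp x y in
  if xy == 0 then Zero i s
  else if xy == dotp x x then Up i s
  else if xy == dotp y y then Down i s
  else Dot xy.

Definition lexlt (r : F -> nat) (x y : vec) : bool :=
  if firstdiff x y is Some i then (r (x i) < r (y i))%N else false.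

(* phi_d(x,y) = phi_d(y,x); only meaningful for x <> y *)
Definition phi (r : F -> nat) (x y : vec) : color :=
  match firstdiff x y with
  | None => Dot 0
  | Some i => if (r (x i) < r (y i))%N then col_ord x y i else col_ord y x i
  end.

Definition in_colors (r : F -> nat) (A : {set vec}) (g : color) : Prop :=
  exists a1 a2, [/\ a1 \in A, a2 \in A, a1 != a2 & phi r a1 a2 = g].

Inductive leftover (r : F -> nat) : {set vec} -> Prop :=
| leftover_single : forall v : vec, leftover r [set v]
| leftover_split : forall (A B : {set vec}) (g : color),
    A != set0 -> B != set0 -> [disjoint A & B] ->
    leftover r A -> leftover r B ->
    (forall c, in_colors r A c -> ~ in_colors r B c) ->
    (forall a b, a \in A -> b \in B -> phi r a b = g) ->
    ~ in_colors r A g -> ~ in_colors r B g ->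
    leftover r (A :|: B).

(* s = [:: s_1; ...; s_t] (0-based) is a t-falling star in S *)
Definition falling_star (r : F -> nat) (S : {set vec}) (s : seq vec) : Prop :=
  uniq s /\ {subset s <= S} /\
  exists alpha : nat -> color,
    forall i j, (j < i)%N -> (i < size s)%N ->
      phi r (nth (s`_0) s i) (nth (s`_0) s j) = alpha i.

End Coloring.

(* Main.v *)
Require Import Defs.
From mathcomp Require Import all_boot all_order all_algebra all_field.

Section Aux.
Variables (F : finFieldType) (d : nat) (r : F -> nat).
Hypothesis hr : injective r.

Lemma phi_sym (x y : vec F d) : phi r x y = phi r y x.
Proof.
rewrite /phi.
have -> : firstdiff y x = firstdiff x y.
  apply: eq_pick => i /=; rewrite eq_sym; congr (_ && _).
  by apply: eq_forallb => j; rewrite eq_sym.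
rewrite /firstdiff; case: pickP => [i /andP[hi _]|//].
have hne : r (x i) != r (y i).
  by apply/eqP => /hr /eqP; rewrite (negbTE hi).
case: ltngtP => //; try (by move=> h; rewrite h eqxx in hne).
Qed.

Lemma star_ext (S A : {set vec F d}) s b g :
  falling_star r A s -> {subset A <= S} -> b \in S -> b \notin A ->
  (forall a, a \in A -> phi r b a = g) -> falling_star r S (rcons s b).
Proof.
move=> [hu [hsub [alpha hal]]] hAS hb hbA hg.
split; first by rewrite rcons_uniq hu andbT; apply/negP => /hsub; rewrite (negbTE hbA).
split.
  move=> x; rewrite mem_rcons inE => /orP[/eqP->//|/hsub]; exact: hAS.
exists (fun i => if (i < size s)%N then alpha i else g).
move=> i j hji; rewrite size_rcons ltnS leq_eqVlt => /orP[/eqP hi|hi].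
  subst i; rewrite ltnn !nth_rcons ltnn eqxx hji.
  apply: hg; apply: hsub; exact: mem_nth.
rewrite hi !nth_rcons hi (ltn_trans hji hi).
have hj := ltn_trans hji hi.
rewrite (@set_nth_default _ _ (s`_0)%R _ _ hi) (@set_nth_default _ _ (s`_0)%R _ _ hj).
exact: hal.
Qed.

Lemma uplog_step (a b : nat) : (b <= a)%N -> (0 < a)%N ->
  (up_log 2 (a + b) <= (up_log 2 a).+1)%N.
Proof.
move=> hba ha; rewrite -up_log2_double //; apply: leq_up_log.
by rewrite -addnn leq_add2l.
Qed.

End Aux.

Theorem lemma3p10 (F : finFieldType) (d : nat) (r : F -> nat)
  (hodd : odd #|F|) (hd : (0 < d)%N) (hr : injective r)
  (S : {set vec F d})
  (hS : forall x, x \in S -> nonzero_vec x)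
  (hp : (1 <= #|S|)%N)
  (hlo : leftover r S) :
  exists s : seq (vec F d),
    falling_star r S s /\ (up_log 2 #|S| + 1 <= size s)%N.
Proof.
clear hS hp hodd hd.
elim: hlo => [v|A B g hA hB hdis _ IHA _ IHB _ hg _ _].
  exists [:: v]; split; last by rewrite cards1 up_log1.
  split=> //; split; first by move=> x; rewrite !inE.
  by exists (fun _ => @Defs.Dot F d 0%R) => i j hji; case: i hji.
have hc : #|A :|: B| = (#|A| + #|B|)%N.
  by rewrite cardsU (disjoint_setI0 hdis) cards0 subn0.
have hA0 : (0 < #|A|)%N by rewrite card_gt0.
have hB0 : (0 < #|B|)%N by rewrite card_gt0.
case: (leqP #|B| #|A|) => hAB.
  have [sA [hsA hsz]] := IHA.
  have [b hb] := set0Pn _ hB.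
  exists (rcons sA b); split.
    apply: (@star_ext _ _ r _ A _ b g hsA).
    - by move=> x hx; rewrite inE hx.
    - by rewrite inE hb orbT.
    - by apply/negP => ha; move: hdis; rewrite disjoint_subset => /subsetP /(_ _ ha); rewrite inE hb.
    - by move=> a ha; rewrite (@phi_sym _ _ r hr); apply: hg.
  rewrite size_rcons hc addn1 ltnS; apply: (leq_trans (uplog_step _ _ hAB hA0)).
  by rewrite addn1 in hsz.
have [sB [hsB hsz]] := IHB.
have [a ha] := set0Pn _ hA.
exists (rcons sB a); split.
  apply: (@star_ext _ _ r _ B _ a g hsB).
  - by move=> x hx; rewrite inE hx orbT.
  - by rewrite inE ha.
  - by apply/negP => hb; move: hdis; rewrite disjoint_subset => /subsetP /(_ _ ha); rewrite inE hb.
  - by move=> b hb; apply: hg.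
rewrite size_rcons hc [#|A| + _]addnC addn1 ltnS; apply: (leq_trans (uplog_step _ _ (ltnW hAB) hB0)).
by rewrite addn1 in hsz.
Qed.
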